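(* Let $C$ be a cycle of goods, $N=\{1,2,3\}$ a set of agents with utility functions $u_1,u_2,u_3$ on $C$, and $c$ a real number with $0<c\le1$. Suppose that for two different agents $i,j\in N$ there is a bundle $A$ of some $\mathrm{mms}(i)$-split and a bundle $B$ of some $\mathrm{mms}(j)$-split of $C$ such that $u_i(A\cap B)\ge c\cdot\mathrm{mms}(i)$. Then there exists a $c$-sufficient allocation of the goods of $C$ to the agents in $N$.
   Context: A cycle of goods has goods $v_1,\dots,v_m$ with edges $v_iv_{i+1}$ and $v_mv_1$. A utility function assigns a non-negative real to each good, extended additively to sets. A bundle is a set of goods inducing a connected subgraph (empty allowed); a $3$-split is a sequence of $3$ pairwise disjoint bundles (possibly empty) with union all goods. $\mathrm{mms}(i)=\mathrm{mms}^{(3)}(C,u_i)=\max_{P_1,P_2,P_3}\min_k u_i(P_k)$ over all $3$-splits; an $\mathrm{mms}(i)$-split is a $3$-split attaining this maximum for $u_i$. An allocation is a $3$-split $P_1,P_2,P_3$ with $P_k$ given to agent $k$; it is $c$-sufficient if $u_k(P_k)\ge c\cdot\mathrm{mms}(k)$ for $k=1,2,3$. *)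

(* Defs.v *)
(* Utilities take values in an arbitrary realFieldType R
   (this includes the real numbers; all notions are finitary/algebraic). *)
From HB Require Import structures.
From mathcomp Require Import all_boot all_order all_algebra.
Set Implicit Arguments. Unset Strict Implicit. Unset Printing Implicit Defensive.
Import Order.TTheory GRing.Theory Num.Theory.
Local Open Scope ring_scope.

(* Goods of the cycle C_m are 'I_m: v_1..v_m is 0..m-1. *)
Definition cyc_adj (m : nat) (x y : 'I_m) : bool :=
  (val y == (val x).+1 %% m)%N || (val x == (val y).+1 %% m)%N.

(* S induces a connected subgraph (empty allowed): any two goods of S are
   joined by a path of the cycle staying inside S. *)
Definition connected_bundle (m : nat) (S : {set 'I_m}) : bool :=
  [forall x in S, forall y in S,
     connect [rel a b | [&& cyc_adj a b, a \in S & b \in S]] x y].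

Definition uset (R : realFieldType) (m : nat) (u : 'I_m -> R) (S : {set 'I_m}) : R :=
  \sum_(x in S) u x.

Definition is_split (m : nat) (P : {ffun 'I_3 -> {set 'I_m}}) : bool :=
  [forall k, connected_bundle (P k)] &&
  [forall k, forall l, (k != l) ==> [disjoint P k & P l]] &&
  (\bigcup_(k < 3) P k == [set: 'I_m]).

Definition minval (R : realFieldType) (m : nat) (u : 'I_m -> R)
    (P : {ffun 'I_3 -> {set 'I_m}}) : R :=
  Num.min (uset u (P ord0)) (Num.min (uset u (P (inord 1))) (uset u (P (inord 2)))).

(* mms^(3)(C,u) = max over 3-splits of min_k u(P_k).  The fold starts at 0,
   which is harmless for non-negative utilities (every split value is >= 0,
   and a split always exists). *)
Definition mms (R : realFieldType) (m : nat) (u : 'I_m -> R) : R :=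
  \big[Num.max/0]_(P : {ffun 'I_3 -> {set 'I_m}} | is_split P) minval u P.

Definition is_mms_split (R : realFieldType) (m : nat) (u : 'I_m -> R)
    (P : {ffun 'I_3 -> {set 'I_m}}) : Prop :=
  is_split P /\ minval u P = mms u.

Definition c_sufficient (R : realFieldType) (m : nat) (u : 'I_3 -> 'I_m -> R)
    (c : R) (P : {ffun 'I_3 -> {set 'I_m}}) : Prop :=
  is_split P /\ forall k : 'I_3, c * mms (u k) <= uset (u k) (P k).

(* Main.v *)
Require Import Defs.
From HB Require Import structures.
From mathcomp Require Import all_boot all_order all_algebra.
From mathcomp Require Import zify lra.
Set Implicit Arguments. Unset Strict Implicit. Unset Printing Implicit Defensive.
Import Order.TTheory GRing.Theory Num.Theory.

Section Geo.
Variable m : nat.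
Notation T := 'I_m.

Definition erel (S : {set T}) := [rel a b : T | [&& cyc_adj a b, a \in S & b \in S]].

Lemma erel_sym (S : {set T}) : symmetric (erel S).
Proof. by move=> a b; rewrite /= /cyc_adj orbC; case: (a \in S); case: (b \in S); rewrite ?andbT ?andbF. Qed.

Lemma connectedP (S : {set T}) : reflect (forall x y, x \in S -> y \in S -> connect (erel S) x y)
  (connected_bundle S).
Proof.
apply: (iffP forallP) => H.
  by move=> x y xS yS; move: (H x); rewrite xS /= => /forallP/(_ y); rewrite yS.
by move=> x; apply/implyP => xS; apply/forallP => y; apply/implyP => yS; apply: H.
Qed.

Definition pos (z x : T) : nat := if (z < x)%N then x - z.+1 else x + m - z.+1.

Lemma m_pos (x : T) : (0 < m)%N.
Proof. by case: x => /= x; case: m. Qed.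

Definition nxt (x : T) : T := Ordinal (ltn_pmod x.+1 (m_pos x)).

Lemma modS (x : T) : (x.+1 %% m = if x.+1 == m then 0 else x.+1)%N.
Proof.
case: eqP => [->|H]; first by rewrite modnn.
by rewrite modn_small //; have := ltn_ord x; lia.
Qed.

Lemma val_nxt x : nat_of_ord (nxt x) = (if x.+1 == m then 0 else x.+1)%N.
Proof. by rewrite /= modS. Qed.

Lemma pos_lt z x : (pos z x < m)%N.
Proof. rewrite /pos; have := ltn_ord x; have := ltn_ord z; case: (ltnP z x); lia. Qed.

Lemma pos_z z : pos z z = m.-1.
Proof. rewrite /pos ltnn; have := ltn_ord z; lia. Qed.

Lemma pos_inj z x y : pos z x = pos z y -> x = y.
Proof.
rewrite /pos => H; apply: ord_inj; move: H; have := ltn_ord x; have := ltn_ord y;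
  have := ltn_ord z; case: (ltnP z x); case: (ltnP z y); lia.
Qed.

Lemma pos_nxt z x : x != z -> pos z (nxt x) = (pos z x).+1.
Proof.
move=> /eqP xz; have xz' : nat_of_ord x <> nat_of_ord z by move=> /ord_inj.
rewrite /pos val_nxt; have := ltn_ord x; have := ltn_ord z.
case E: (x.+1 == m); move/eqP: E => E /=; do ?case: ifP => ?; lia.
Qed.

Lemma pos_nxt_z z : pos z (nxt z) = 0%N.
Proof.
rewrite /pos; have := ltn_ord z; case: (ltnP z (nxt z)); rewrite /= modS; case: eqP; lia.
Qed.

Lemma adj_pos z a b : cyc_adj a b -> a != z -> b != z ->
  pos z b = (pos z a).+1 \/ pos z a = (pos z b).+1.
Proof.
move=> /orP [] /eqP E az bz.
- left; have -> : b = nxt a by apply: val_inj; rewrite /= E.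
  exact: pos_nxt.
- right; have -> : a = nxt b by apply: val_inj; rewrite /= E.
  exact: pos_nxt.
Qed.

Definition convex z (S : {set T}) :=
  forall x y w, x \in S -> y \in S -> (pos z x <= pos z w)%N -> (pos z w <= pos z y)%N -> w \in S.

Lemma walk z (U : {set T}) (x y : T) : (pos z x <= pos z y)%N ->
  (forall w, (pos z x <= pos z w)%N -> (pos z w <= pos z y)%N -> w \in U) ->
  connect (erel U) x y.
Proof.
move Hn : (pos z y - pos z x)%N => n; elim: n x Hn => [|n IH] x Hn le H.
  have -> : x = y by apply: (pos_inj (z:=z)); lia.
  exact: connect0.
have xz : x != z.
  apply/eqP => E; have := pos_lt z y; rewrite E pos_z in Hn *; lia.
apply: (connect_trans (y := nxt x)).
  apply: connect1; rewrite /= !H ?pos_nxt ?leqnn //; try lia.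
  by rewrite /cyc_adj eqxx.
apply: IH; rewrite ?pos_nxt //; try lia.
by move=> w h1 h2; apply: H; lia.
Qed.

Lemma K2 z (S : {set T}) : convex z S -> connected_bundle S.
Proof.
move=> cv; apply/connectedP => x y xS yS.
case: (leqP (pos z x) (pos z y)) => h.
  by apply: (walk (z:=z)) => // w h1 h2; apply: (cv x y).
rewrite (sym_connect_sym (@erel_sym S)).
by apply: (walk (z:=z)); [lia|] => w h1 h2; apply: (cv y x).
Qed.

Lemma K1 z (S : {set T}) : connected_bundle S -> z \notin S -> convex z S.
Proof.
move=> /connectedP cS zS x y w xS yS h1 h2; apply/negPn/negP => wS.
have neq : forall v, v \in S -> pos z v <> pos z w.
  by move=> v vS /pos_inj E; move: wS; rewrite -E vS.
have hx := neq x xS; have hy := neq y yS.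
have cl : closed (erel S) [pred v | (pos z v < pos z w)%N].
  move=> a b /= /and3P [ab aS bS].
  have az : a != z by apply: contraNneq zS => <-.
  have bz : b != z by apply: contraNneq zS => <-.
  have ha := neq a aS; have hb := neq b bS.
  rewrite !inE; case: (adj_pos ab az bz) => E; apply/idP/idP; lia.
have := @closed_connect _ (erel S) [pred v | (pos z v < pos z w)%N] cl x y (cS x y xS yS).
rewrite !inE => E.
have : (pos z x < pos z w)%N by lia.
by rewrite E; lia.
Qed.

Lemma connT (U : {set T}) x y : x \in U -> y \in U -> connect (erel U) y x -> connect (erel U) x y.
Proof. by move=> _ _; rewrite (sym_connect_sym (@erel_sym U)). Qed.

Lemma L_compl (S : {set T}) : connected_bundle S -> connected_bundle (~: S).
Proof.
move=> cS; apply/connectedP => y1 y2 h1 h2.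
have h1' := h1; rewrite in_setC in h1'.
have {}cv := K1 cS h1'.
have ny2 : y2 \notin S by rewrite -in_setC.
case: (boolP [exists s in S, (pos y1 s < pos y1 y2)%N]).
  case/exists_inP => s sS lt.
  apply: (connT h1 h2); apply: (walk (z:=y1)); first by rewrite pos_z; have := pos_lt y1 y2; lia.
  move=> w l1 l2; rewrite in_setC; apply/negP => wS.
  by move: ny2; rewrite (cv s w y2 sS wS) //; lia.
move/exists_inPn => H.
have H' : forall w, (pos y1 w <= pos y1 y2)%N -> w \in ~: S.
  move=> w le; rewrite in_setC; apply/negP => wS.
  have := H w wS; rewrite -leqNgt => le2.
  have E : w = y2 by apply: (pos_inj (z:=y1)); lia.
  by move: ny2; rewrite -E wS.
apply: (connect_trans (y := nxt y1)).
  apply: connect1; rewrite /= /cyc_adj eqxx /= h1 /=; apply: H'.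
  by rewrite pos_nxt_z.
apply: (walk (z:=y1)); rewrite ?pos_nxt_z // => w _ le; exact: H'.
Qed.

Lemma L_inter (S S' : {set T}) : connected_bundle S -> connected_bundle S' ->
  S :|: S' != setT -> connected_bundle (S :&: S').
Proof.
move=> c1 c2 ne; case: (pickP [pred z | z \notin S :|: S']) => [z /= zn|H]; last first.
  have E : S :|: S' = setT by apply/setP => z; rewrite in_setT; apply: negbFE; apply: H.
  by rewrite E eqxx in ne.
rewrite in_setU negb_or in zn; case/andP: zn => z1 z2.
have cv1 := K1 c1 z1; have cv2 := K1 c2 z2.
apply: (K2 (z:=z)) => x y w; rewrite !inE => /andP [x1 x2] /andP [y1 y2] l1 l2.
by rewrite (cv1 x y w) ?(cv2 x y w).
Qed.

Definition bef z (D E : {set T}) := forall d e, d \in D -> e \in E -> (pos z d < pos z e)%N.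

Lemma nbef z D E : ~ bef z D E -> exists2 d, d \in D & exists2 e, e \in E & (pos z e <= pos z d)%N.
Proof.
move=> nb.
have : ~~ [forall d in D, forall e in E, (pos z d < pos z e)%N].
  apply/negP => /forall_inP H; apply: nb => d e dD eE.
  by move: (H d dD) => /forall_inP /(_ e eE).
case/forall_inPn => d dD /forall_inPn [e eE]; rewrite -leqNgt => le.
by exists d => //; exists e.
Qed.

Lemma disj_mem (D E : {set T}) x : [disjoint D & E] -> x \in D -> x \in E -> False.
Proof. by move=> dj xD; rewrite (disjointFr dj xD). Qed.

Lemma order z (D E : {set T}) : convex z D -> convex z E -> [disjoint D & E] ->
  bef z D E \/ bef z E D.
Proof.
move=> cD cE dj.
case: (pickP (mem D)) => [d0 d0D|HD]; last by left => d e; rewrite [d \in D]HD.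
case: (pickP (mem E)) => [e0 e0E|HE]; last by right => d e; rewrite [d \in E]HE.
have ne : forall d e, d \in D -> e \in E -> pos z d <> pos z e.
  by move=> d e dD eE /pos_inj Eq; apply: (disj_mem dj dD); rewrite Eq.
case: (ltnP (pos z d0) (pos z e0)) => h.
  left => d e dD eE; have := ne d e dD eE; have := ne d0 e d0D eE; have := ne d e0 dD e0E.
  case: (ltnP (pos z d) (pos z e)) => // h2 n1 n2 n3; exfalso.
  case: (ltnP (pos z e) (pos z d0)) => h3.
    by apply: (disj_mem dj d0D); apply: (cE e e0) => //; lia.
  by apply: (disj_mem dj _ eE); apply: (cD d0 d) => //; lia.
right => e d eE dD; have := ne d e dD eE; have := ne d0 e d0D eE; have := ne d e0 dD e0E.
have := ne d0 e0 d0D e0E.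
case: (ltnP (pos z e) (pos z d)) => // h2 n0 n1 n2 n3; exfalso.
case: (ltnP (pos z d) (pos z e0)) => h3.
  by apply: (disj_mem dj _ e0E); apply: (cD d d0) => //; lia.
by apply: (disj_mem dj dD); apply: (cE e0 e) => //; lia.
Qed.

Definition part2 (W W1 W2 : {set T}) :=
  [/\ connected_bundle W1, connected_bundle W2, [disjoint W1 & W2] & W1 :|: W2 = W].

Lemma part2C W W1 W2 : part2 W W1 W2 -> part2 W W2 W1.
Proof. by case=> a b c d; split => //; [rewrite disjoint_sym | rewrite setUC]. Qed.

Lemma cut z (W D E : {set T}) : convex z W -> D \subset W -> E \subset W -> bef z D E ->
  exists W1 W2, [/\ part2 W W1 W2, D \subset W1 & E \subset W2].
Proof.
move=> cW /subsetP DW /subsetP EW bDE.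
set W1 := [set w in W | [exists d in D, (pos z w <= pos z d)%N]].
have cW1 : convex z W1.
  move=> x y w; rewrite !inE => /andP [xW _] /andP [yW /exists_inP [d dD le]] l1 l2.
  rewrite (cW x y w) //=; apply/exists_inP; exists d => //; lia.
have cW2 : convex z (W :\: W1).
  move=> x y w; rewrite !inE => /andP [nx xW] /andP [_ yW] l1 l2.
  have wW := cW x y w xW yW l1 l2; rewrite wW andbT /=; apply/negP => /exists_inP [d dD le].
  by move: nx; rewrite xW /=; apply/negP/negPn/exists_inP; exists d => //; lia.
exists W1, (W :\: W1); split; first split.
- exact: K2 cW1.
- exact: K2 cW2.
- by rewrite disjoints_subset; apply/subsetP => x; rewrite !inE => ->.
- by apply/setP => x; rewrite !inE; case: (x \in W) => /=; rewrite ?andbT ?orbN ?andbF.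
- by apply/subsetP => d dD; rewrite inE DW //=; apply/exists_inP; exists d.
- apply/subsetP => e eE; rewrite !inE EW // andbT /=; apply/negP => /exists_inP [d dD le].
  by have := bDE d e dD eE; lia.
Qed.


Lemma befP z (D E : {set T}) : reflect (bef z D E) [forall d in D, forall e in E, (pos z d < pos z e)%N].
Proof.
apply: (iffP forall_inP) => H.
  by move=> d e dD eE; move: (H d dD) => /forall_inP /(_ e eE).
by move=> d dD; apply/forall_inP => e eE; apply: H.
Qed.

Lemma befUl z (D1 D2 E : {set T}) : bef z D1 E -> bef z D2 E -> bef z (D1 :|: D2) E.
Proof. by move=> h1 h2 d e; rewrite inE => /orP [] ?; [apply: h1 | apply: h2]. Qed.

Lemma befUr z (D E1 E2 : {set T}) : bef z D E1 -> bef z D E2 -> bef z D (E1 :|: E2).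
Proof. by move=> h1 h2 d e dD; rewrite inE => /orP [] ?; [apply: h1 | apply: h2]. Qed.

Lemma bef_trans z (D E F : {set T}) y : y \in E -> bef z D E -> bef z E F -> bef z D F.
Proof. move=> yE h1 h2 d f dD fF; have := h1 d y dD yE; have := h2 y f yE fF; lia. Qed.

Lemma two_core z (W Ia Ib Jc Jd : {set T}) : convex z W ->
  Ia \subset W -> Ib \subset W -> Jc \subset W -> Jd \subset W ->
  bef z Ia Ib -> bef z Jc Jd ->
  exists W1 W2, [/\ part2 W W1 W2, (Ia \subset W1 \/ Ib \subset W1) & (Jc \subset W2 \/ Jd \subset W2)].
Proof.
move=> cW sa sb sc sd bI bJ.
case: (befP z Ia Jd) => [h|nh].
  have [W1 [W2 [p s1 s2]]] := cut cW sa sd h.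
  by exists W1, W2; split => //; [left|right].
have [a aI [b bJd le]] := nbef nh.
have h : bef z Jc Ib.
  by move=> x y xJ yI; have := bJ x b xJ bJd; have := bI a y aI yI; lia.
have [W1 [W2 [p s1 s2]]] := cut cW sc sb h.
by exists W2, W1; split; [exact: part2C p | right | left].
Qed.

Lemma two z (W I1 I2 J1 J2 : {set T}) : convex z W ->
  convex z I1 -> convex z I2 -> convex z J1 -> convex z J2 ->
  I1 \subset W -> I2 \subset W -> J1 \subset W -> J2 \subset W ->
  [disjoint I1 & I2] -> [disjoint J1 & J2] ->
  exists W1 W2, [/\ part2 W W1 W2, (I1 \subset W1 \/ I2 \subset W1) & (J1 \subset W2 \/ J2 \subset W2)].
Proof.
move=> cW c1 c2 c3 c4 s1 s2 s3 s4 dI dJ.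
case: (order c1 c2 dI) => hI; case: (order c3 c4 dJ) => hJ.
- exact: (two_core cW s1 s2 s3 s4 hI hJ).
- have [W1 [W2 [p h1 h2]]] := two_core cW s1 s2 s4 s3 hI hJ.
  by exists W1, W2; split => //; case: h2; [right|left].
- have [W1 [W2 [p h1 h2]]] := two_core cW s2 s1 s3 s4 hI hJ.
  by exists W1, W2; split => //; case: h1; [right|left].
- have [W1 [W2 [p h1 h2]]] := two_core cW s2 s1 s4 s3 hI hJ.
  by exists W1, W2; split => //; [case: h1|case: h2]; [right|left|right|left].
Qed.

Lemma cut3_core z (W Ia Ib J : {set T}) a0 : a0 \in Ia -> convex z W -> convex z J -> convex z Ia ->
  convex z Ib -> Ia \subset W -> Ib \subset W -> J \subset W ->
  [disjoint J & Ia] -> [disjoint J & Ib] -> bef z Ia Ib ->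
  exists W1 W2, [/\ part2 W W1 W2, Ia \subset W1, Ib \subset W2 & (J \subset W1 \/ J \subset W2)].
Proof.
move=> a0I cW cJ ca cb sa sb sJ d1 d2 bI.
case: (order cJ ca d1) => h1.
  have h : bef z (J :|: Ia) Ib by apply: befUl => //; apply: (bef_trans a0I).
  have [W1 [W2 [p s1 s2]]] := cut cW (D := J :|: Ia) (E := Ib) ltac:(by rewrite subUset sJ sa) sb h.
  exists W1, W2; split => //; last left; apply: subset_trans s1;
    by rewrite ?subsetUl ?subsetUr.
case: (order cJ cb d2) => h2.
  have h : bef z (Ia :|: J) Ib by apply: befUl.
  have [W1 [W2 [p s1 s2]]] := cut cW (D := Ia :|: J) (E := Ib) ltac:(by rewrite subUset sJ sa) sb h.
  exists W1, W2; split => //; last left; apply: subset_trans s1;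
    by rewrite ?subsetUl ?subsetUr.
have h : bef z Ia (Ib :|: J) by apply: befUr.
have [W1 [W2 [p s1 s2]]] := cut cW (D := Ia) (E := Ib :|: J) sa ltac:(by rewrite subUset sJ sb) h.
exists W1, W2; split => //; last right; apply: subset_trans s2;
  by rewrite ?subsetUl ?subsetUr.
Qed.

Lemma cut3 z (W I1 I2 J : {set T}) x1 x2 : x1 \in I1 -> x2 \in I2 ->
  convex z W -> convex z J -> convex z I1 -> convex z I2 ->
  I1 \subset W -> I2 \subset W -> J \subset W ->
  [disjoint I1 & I2] -> [disjoint J & I1] -> [disjoint J & I2] ->
  exists W1 W2, [/\ part2 W W1 W2, (I1 \subset W1 \/ I2 \subset W1),
     (I1 \subset W2 \/ I2 \subset W2) & (J \subset W1 \/ J \subset W2)].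
Proof.
move=> x1I x2I cW cJ c1 c2 s1 s2 sJ d12 d1 d2.
case: (order c1 c2 d12) => h.
  have [W1 [W2 [p h1 h2 h3]]] := cut3_core x1I cW cJ c1 c2 s1 s2 sJ d1 d2 h.
  by exists W1, W2; split => //; [left|right].
have [W1 [W2 [p h1 h2 h3]]] := cut3_core x2I cW cJ c2 c1 s2 s1 sJ d2 d1 h.
by exists W1, W2; split => //; [right|left].
Qed.

End Geo.

Lemma I3_cases (l : 'I_3) : l = ord0 \/ l = inord 1 \/ l = inord 2.
Proof.
case: l => [[|[|[|n]]] H].
- by left; apply: val_inj.
- by right; left; apply: val_inj; rewrite /= inordK.
- by right; right; apply: val_inj; rewrite /= inordK.
- by [].
Qed.

Lemma I3_of3 (i j k p : 'I_3) : i != j -> i != k -> j != k -> p = i \/ p = j \/ p = k.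
Proof.
move=> /eqP ij /eqP ik /eqP jk.
have h1 : nat_of_ord i <> nat_of_ord j by move=> /ord_inj.
have h2 : nat_of_ord i <> nat_of_ord k by move=> /ord_inj.
have h3 : nat_of_ord j <> nat_of_ord k by move=> /ord_inj.
have := ltn_ord i; have := ltn_ord j; have := ltn_ord k; have := ltn_ord p => *.
have : (nat_of_ord p = i \/ nat_of_ord p = j \/ nat_of_ord p = k) by lia.
by case=> [/ord_inj|[/ord_inj|/ord_inj]]; auto.
Qed.

Definition third (i j : 'I_3) : 'I_3 := inord (3 - i - j).

Lemma third_neq (i j : 'I_3) : i != j -> third i j != i /\ third i j != j.
Proof.
move=> /eqP ij; have h1 : nat_of_ord i <> nat_of_ord j by move=> /ord_inj.
have := ltn_ord i; have := ltn_ord j => *.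
rewrite /third; split; apply/eqP => /(congr1 (@nat_of_ord 3)); rewrite inordK; lia.
Qed.

Definition other (i : 'I_3) : 'I_3 := if i == ord0 then inord 1 else ord0.

Lemma other_neq i : other i != i.
Proof.
rewrite /other; case: ifP => [/eqP ->|/negbT h]; last by rewrite eq_sym.
by apply/eqP => /(congr1 (@nat_of_ord 3)); rewrite inordK.
Qed.

Section Val.
Local Open Scope ring_scope.
Variable R : realFieldType.
Variable m : nat.
Notation T := 'I_m.

Lemma uset_ge0 (u : T -> R) X : (forall x, 0 <= u x) -> 0 <= uset u X.
Proof. by move=> h; apply: sumr_ge0. Qed.

Lemma uset_sub (u : T -> R) (X Y : {set T}) : (forall x, 0 <= u x) -> X \subset Y ->
  uset u X <= uset u Y.
Proof.
move=> h sXY; rewrite /uset (big_setID (A := Y) X) /=.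
have -> : Y :&: X = X by apply/setIidPr.
by rewrite lerDl; apply: sumr_ge0.
Qed.

Lemma uset_pos (u : T -> R) (X : {set T}) : 0 < uset u X -> exists x, x \in X.
Proof.
move=> h; apply/set0Pn; apply/negP => /eqP E; move: h.
by rewrite E /uset big_set0 ltxx.
Qed.

Lemma split_sum (u : T -> R) (S : {ffun 'I_3 -> {set T}}) : is_split S ->
  uset u setT = uset u (S ord0) + uset u (S (inord 1)) + uset u (S (inord 2)).
Proof.
case/andP => /andP [_ /forallP dj] /eqP cov.
rewrite /uset -cov partition_disjoint_bigcup.
  rewrite !big_ord_recr big_ord0 /= add0r; congr (_ + _ + _); apply: eq_bigl => x;
    by congr (x \in S _); apply: val_inj; rewrite /= ?inordK.
by move=> k l kl; move: (dj k) => /forallP /(_ l); rewrite kl.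
Qed.

Lemma split_conn (S : {ffun 'I_3 -> {set T}}) k : is_split S -> connected_bundle (S k).
Proof. by case/andP => /andP [/forallP h _] _. Qed.

Lemma split_disj (S : {ffun 'I_3 -> {set T}}) k l : is_split S -> k != l -> [disjoint S k & S l].
Proof. by case/andP => /andP [_ /forallP dj] _ kl; move: (dj k) => /forallP /(_ l); rewrite kl. Qed.

Lemma split_cov (S : {ffun 'I_3 -> {set T}}) x : is_split S -> exists k, x \in S k.
Proof.
case/andP => _ /eqP cov; have : x \in \bigcup_(k < 3) S k by rewrite cov inE.
by case/bigcupP => k _ h; exists k.
Qed.

Lemma split_of (S : {ffun 'I_3 -> {set T}}) : (forall k, connected_bundle (S k)) ->
  (forall k l, k != l -> [disjoint S k & S l]) -> (forall x, exists k, x \in S k) -> is_split S.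
Proof.
move=> c d cv; apply/andP; split; first (apply/andP; split).
- by apply/forallP.
- by apply/forallP => k; apply/forallP => l; apply/implyP; apply: d.
- apply/eqP/setP => x; rewrite inE; case: (cv x) => k h.
  by apply/bigcupP; exists k.
Qed.

Lemma minval_le (u : T -> R) S l : minval u S <= uset u (S l).
Proof.
rewrite /minval; case: (I3_cases l) => [->|[->|->]].
- by rewrite ge_min lexx.
- by rewrite ge_min ge_min lexx orbT.
- by rewrite ge_min ge_min lexx !orbT.
Qed.

Lemma minval_ge0 (u : T -> R) S : (forall x, 0 <= u x) -> 0 <= minval u S.
Proof. by move=> h; rewrite /minval !le_min !uset_ge0. Qed.

Lemma mms_ge0 (u : T -> R) : (forall x, 0 <= u x) -> 0 <= mms u.
Proof.
move=> h; rewrite /mms; apply: (@big_ind R (fun v : R => 0 <= v)) => //.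
  by move=> x y hx hy; rewrite le_max hx.
by move=> S _; apply: minval_ge0.
Qed.

Lemma mms_bound (u : T -> R) : (forall x, 0 <= u x) -> mms u + mms u + mms u <= uset u setT.
Proof.
move=> h; rewrite /mms; apply: (@big_ind R (fun v : R => v + v + v <= uset u setT)).
- by rewrite !addr0 uset_ge0.
- by move=> x y hx hy; case: (leP x y).
move=> S sS; rewrite (split_sum u sS).
by apply: lerD; first apply: lerD; apply: minval_le.
Qed.

Lemma mms_split_ge (u : T -> R) S l : is_mms_split u S -> mms u <= uset u (S l).
Proof. by case=> _ <-; apply: minval_le. Qed.

Lemma pick_happy (u : T -> R) (c : R) S : (forall x, 0 <= u x) -> c <= 1 -> is_split S ->
  exists l, c * mms u <= uset u (S l).
Proof.
move=> h c1 sS.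
have hM := mms_ge0 h; have hb := mms_bound h; rewrite (split_sum u sS) in hb.
have hc : c * mms u <= mms u by apply: ler_piMl.
move: hc hb; move: (c * mms u) => y; move: (mms u) => M hc hb.
case: (lerP y (uset u (S ord0))) => h0; first by exists ord0.
case: (lerP y (uset u (S (inord 1)))) => h1; first by exists (inord 1).
case: (lerP y (uset u (S (inord 2)))) => h2; first by exists (inord 2).
exfalso; lra.
Qed.

End Val.

Lemma n10 : (inord 1 : 'I_3) != ord0.
Proof. by apply/eqP => /(congr1 (@nat_of_ord 3)); rewrite inordK. Qed.
Lemma n20 : (inord 2 : 'I_3) != ord0.
Proof. by apply/eqP => /(congr1 (@nat_of_ord 3)); rewrite inordK. Qed.
Lemma n21 : (inord 2 : 'I_3) != inord 1.
Proof. by apply/eqP => /(congr1 (@nat_of_ord 3)); rewrite !inordK. Qed.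

Section Asm.
Variable m : nat.
Notation T := 'I_m.

Definition mk3 (V W1 W2 : {set T}) : {ffun 'I_3 -> {set T}} :=
  [ffun k : 'I_3 => if k == ord0 then V else if k == inord 1 then W1 else W2].

Lemma mk3_0 V W1 W2 : mk3 V W1 W2 ord0 = V.
Proof. by rewrite ffunE eqxx. Qed.
Lemma mk3_1 V W1 W2 : mk3 V W1 W2 (inord 1) = W1.
Proof. by rewrite ffunE (negbTE n10) eqxx. Qed.
Lemma mk3_2 V W1 W2 : mk3 V W1 W2 (inord 2) = W2.
Proof. by rewrite ffunE (negbTE n20) (negbTE n21). Qed.

Lemma split_part (V W1 W2 : {set T}) : connected_bundle V -> part2 (~: V) W1 W2 ->
  is_split (mk3 V W1 W2).
Proof.
move=> cV [c1 c2 d12 U].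
have s1 : W1 \subset ~: V by rewrite -U subsetUl.
have s2 : W2 \subset ~: V by rewrite -U subsetUr.
have d1 : [disjoint V & W1] by rewrite disjoint_sym disjoints_subset.
have d2 : [disjoint V & W2] by rewrite disjoint_sym disjoints_subset.
apply: split_of.
- by move=> k; case: (I3_cases k) => [->|[->|->]]; rewrite ?mk3_0 ?mk3_1 ?mk3_2.
- move=> k l; case: (I3_cases k) => [->|[->|->]]; case: (I3_cases l) => [->|[->|->]];
    rewrite ?eqxx // ?mk3_0 ?mk3_1 ?mk3_2 => _; first [done | by rewrite disjoint_sym].
- move=> x; case: (boolP (x \in V)) => h; first by exists ord0; rewrite mk3_0.
  have : x \in ~: V by rewrite inE.
  rewrite -U inE => /orP [] h'; [exists (inord 1); rewrite mk3_1 | exists (inord 2); rewrite mk3_2] => //.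
Qed.

Local Open Scope ring_scope.
Variable R : realFieldType.
Variable u : 'I_3 -> T -> R.
Variable c : R.

Lemma assemble (i j k si sj sk : 'I_3) (S : {ffun 'I_3 -> {set T}}) :
  i != j -> i != k -> j != k -> si != sj -> si != sk -> sj != sk -> is_split S ->
  c * mms (u i) <= uset (u i) (S si) -> c * mms (u j) <= uset (u j) (S sj) ->
  c * mms (u k) <= uset (u k) (S sk) ->
  exists P : {ffun 'I_3 -> {set T}}, c_sufficient u c P.
Proof.
move=> ij ik jk sij sik sjk sS hi hj hk.
pose sg (p : 'I_3) := if p == i then si else if p == j then sj else sk.
have gi : sg i = si by rewrite /sg eqxx.
have gj : sg j = sj by rewrite /sg eq_sym (negbTE ij) eqxx.
have gk : sg k = sk by rewrite /sg eq_sym (negbTE ik) eq_sym (negbTE jk).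
exists [ffun p => S (sg p)]; split.
  apply: split_of.
  - by move=> p; rewrite ffunE; apply: split_conn.
  - move=> p q pq; rewrite !ffunE; apply: split_disj => //.
    case: (I3_of3 p ij ik jk) pq => [->|[->|->]]; case: (I3_of3 q ij ik jk) => [->|[->|->]];
      rewrite ?eqxx // ?gi ?gj ?gk => _ //; rewrite eq_sym //.
  - move=> x; case: (split_cov x sS) => l h.
    case: (I3_of3 l sij sik sjk) h => [->|[->|->]] h.
    + by exists i; rewrite ffunE gi.
    + by exists j; rewrite ffunE gj.
    + by exists k; rewrite ffunE gk.
move=> p; rewrite ffunE.
by case: (I3_of3 p ij ik jk) => [->|[->|->]]; rewrite ?gi ?gj ?gk.
Qed.

End Asm.

Unset Implicit Arguments.
Local Open Scope ring_scope.

Theorem lemma4p11 (R : realFieldType) (m : nat) (u : 'I_3 -> 'I_m -> R) (c : R) :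
  (forall (k : 'I_3) (x : 'I_m), 0 <= u k x) ->
  0 < c -> c <= 1 ->
  (exists (i j : 'I_3) (P Q : {ffun 'I_3 -> {set 'I_m}}) (a b : 'I_3),
      [/\ i != j, is_mms_split (u i) P, is_mms_split (u j) Q &
          c * mms (u i) <= uset (u i) (P a :&: Q b)]) ->
  exists P : {ffun 'I_3 -> {set 'I_m}}, c_sufficient u c P.
Proof.
move=> u0 c0 c1 [i [j [P [Q [a [b [ij hP hQ hX]]]]]]].
set k := third i j; have [ki kj] := third_neq ij.
have ik : i != k by rewrite eq_sym. have jk : j != k by rewrite eq_sym.
have sP := hP.1; have sQ := hQ.1.
have hpP : forall l, c * mms (u i) <= uset (u i) (P l).
  by move=> l; apply: le_trans (mms_split_ge l hP); apply: ler_piMl => //; apply: mms_ge0.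
have hpQ : forall l, c * mms (u j) <= uset (u j) (Q l).
  by move=> l; apply: le_trans (mms_split_ge l hQ); apply: ler_piMl => //; apply: mms_ge0.
have nl : forall l : 'I_3, l != other l by move=> l; rewrite eq_sym other_neq.
case: (lerP (mms (u i)) 0) => Mi.
  have Mi' : mms (u i) = 0 by apply/eqP; rewrite eq_le Mi mms_ge0.
  have [l hl] := pick_happy (u0 k) c1 sQ.
  have [t1 t2] := third_neq (nl l).
  apply: (assemble (si := third l (other l)) (sj := other l) (sk := l) ij ik jk _ _ _ sQ _ (hpQ _) hl) => //; try exact: other_neq.
  by rewrite Mi' mulr0 uset_ge0.
case: (lerP (mms (u j)) 0) => Mj.
  have Mj' : mms (u j) = 0 by apply/eqP; rewrite eq_le Mj mms_ge0.
  have [l hl] := pick_happy (u0 k) c1 sP.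
  have [t1 t2] := third_neq (nl l).
  apply: (assemble (si := other l) (sj := third l (other l)) (sk := l) ij ik jk _ _ _ sP (hpP _) _ hl) => //; try exact: other_neq; try by rewrite eq_sym.
  by rewrite Mj' mulr0 uset_ge0.
set a2 := other a; set a3 := third a a2; set b2 := other b; set b3 := third b b2.
have [a3a a3a2] := third_neq (nl a); have [b3b b3b2] := third_neq (nl b).
have a2a : a2 != a by apply: other_neq.
have a2a3 : a2 != a3 by rewrite eq_sym. have b2b : b2 != b by apply: other_neq.
have b2b3 : b2 != b3 by rewrite eq_sym.
have neP : forall l, exists x, x \in P l.
  move=> l; apply: (uset_pos (u := u i)); apply: lt_le_trans (mms_split_ge l hP); done.
have neQ : forall l, exists x, x \in Q l.
  move=> l; apply: (uset_pos (u := u j)); apply: lt_le_trans (mms_split_ge l hQ); done.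
have dP : forall l l' x, l != l' -> x \in P l -> x \in P l' -> False.
  by move=> l l' x ll'; exact: (disj_mem (split_disj sP ll')).
have dQ : forall l l' x, l != l' -> x \in Q l -> x \in Q l' -> False.
  by move=> l l' x ll'; exact: (disj_mem (split_disj sQ ll')).
have cPl := fun l => split_conn l sP; have cQl := fun l => split_conn l sQ.
case: (boolP (P a :|: Q b == setT)) => hU.
-
  have inA : forall x, x \notin Q b -> x \in P a.
    move=> x xn; have : x \in P a :|: Q b by rewrite (eqP hU) inE.
    by rewrite inE (negbTE xn) orbF.
  have [z zB3] := neQ b3.
  set W := ~: Q b3.
  have cW0 := L_compl (cQl b3).
  have zW : z \notin W by rewrite inE zB3.
  have cW := K1 cW0 zW.
  have nz : forall S : {set 'I_m}, S \subset W -> z \notin S.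
    by move=> S0 sub; apply/negP => zS; move/negP: zW; apply; apply: (subsetP sub).
  have sA : forall l, l != a -> P l \subset W.
    move=> l la; apply/subsetP => x xl; rewrite inE; apply/negP => xB3.
    apply: (dP l a x) => //; apply: inA; apply/negP => xB.
    by apply: (dQ b3 b x).
  have sB2 : Q b2 \subset W.
    by rewrite -disjoints_subset; apply: (split_disj sQ); rewrite eq_sym.
  have dBA : forall l, l != a -> [disjoint Q b2 & P l].
    move=> l la; rewrite disjoints_subset; apply/subsetP => x xB2; rewrite inE; apply/negP => xl.
    apply: (dP l a x) => //; apply: inA; apply/negP => xB.
    by apply: (dQ b2 b x).
  have [x1 x1P] := neP a2; have [x2 x2P] := neP a3.
  have [W1 [W2 [p h1 h2 h3]]] := cut3 x1P x2P cW (K1 (cQl b2) (nz _ sB2))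
     (K1 (cPl a2) (nz _ (sA _ a2a))) (K1 (cPl a3) (nz _ (sA _ a3a)))
     (sA _ a2a) (sA _ a3a) sB2 (split_disj sP a2a3) (dBA _ a2a) (dBA _ a3a).
  have sS := split_part (cQl b3) p.
  have hiW : forall V : {set 'I_m}, P a2 \subset V \/ P a3 \subset V -> c * mms (u i) <= uset (u i) V.
    by move=> V [] h; [apply: le_trans (hpP a2) _ | apply: le_trans (hpP a3) _]; exact: uset_sub (u0 _) h.
  have hjW : forall V : {set 'I_m}, Q b2 \subset V -> c * mms (u j) <= uset (u j) V.
    by move=> V h; apply: le_trans (hpQ b2) _; exact: uset_sub (u0 _) h.
  have [l hl] := pick_happy (u0 k) c1 sS.
  have e10 := n10; have e20 := n20; have e21 := n21.
  have e01 : (ord0 : 'I_3) != inord 1 by rewrite eq_sym.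
  have e02 : (ord0 : 'I_3) != inord 2 by rewrite eq_sym.
  have e12 : (inord 1 : 'I_3) != inord 2 by rewrite eq_sym.
  case: (I3_cases l) hl => [->|[->|->]] hl.
  + case: h3 => h3.
      apply: (assemble (si := inord 2) (sj := inord 1) (sk := ord0) ij ik jk _ _ _ sS) => //.
      * by rewrite mk3_2; apply: hiW.
      * by rewrite mk3_1; apply: hjW.
    apply: (assemble (si := inord 1) (sj := inord 2) (sk := ord0) ij ik jk _ _ _ sS) => //.
    * by rewrite mk3_1; apply: hiW.
    * by rewrite mk3_2; apply: hjW.
  + apply: (assemble (si := inord 2) (sj := ord0) (sk := inord 1) ij ik jk _ _ _ sS) => //.
    * by rewrite mk3_2; apply: hiW.
    * by rewrite mk3_0; apply: hpQ.
  + apply: (assemble (si := inord 1) (sj := ord0) (sk := inord 2) ij ik jk _ _ _ sS) => //.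
    * by rewrite mk3_1; apply: hiW.
    * by rewrite mk3_0; apply: hpQ.
-
  set X := P a :&: Q b.
  have cX := L_inter (cPl a) (cQl b) hU.
  have [z zX] : exists z, z \in X.
    apply: (uset_pos (u := u i)); apply: lt_le_trans hX; exact: mulr_gt0.
  set W := ~: X.
  have cW0 := L_compl cX.
  have zW : z \notin W by rewrite inE zX.
  have cW := K1 cW0 zW.
  have nz : forall S : {set 'I_m}, S \subset W -> z \notin S.
    by move=> S0 sub; apply/negP => zS; move/negP: zW; apply; apply: (subsetP sub).
  have sA : forall l, l != a -> P l \subset W.
    move=> l la; apply/subsetP => x xl; rewrite !inE negb_and; apply/orP; left; apply/negP => xa.
    exact: (dP l a x).
  have sB : forall l, l != b -> Q l \subset W.
    move=> l lb; apply/subsetP => x xl; rewrite !inE negb_and; apply/orP; right; apply/negP => xb.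
    exact: (dQ l b x).
  have cA := fun l (h : l != a) => K1 (cPl l) (nz _ (sA l h)).
  have cB := fun l (h : l != b) => K1 (cQl l) (nz _ (sB l h)).
  have [Y [Z [p h1 h2]]] := two cW (cB _ b2b) (cB _ b3b) (cB _ b2b) (cB _ b3b)
    (sB _ b2b) (sB _ b3b) (sB _ b2b) (sB _ b3b) (split_disj sQ b2b3) (split_disj sQ b2b3).
  have sS := split_part cX p.
  have hiW : forall V : {set 'I_m}, P a2 \subset V \/ P a3 \subset V -> c * mms (u i) <= uset (u i) V.
    by move=> V [] h; [apply: le_trans (hpP a2) _ | apply: le_trans (hpP a3) _]; exact: uset_sub (u0 _) h.
  have hjW : forall V : {set 'I_m}, Q b2 \subset V \/ Q b3 \subset V -> c * mms (u j) <= uset (u j) V.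
    by move=> V [] h; [apply: le_trans (hpQ b2) _ | apply: le_trans (hpQ b3) _]; exact: uset_sub (u0 _) h.
  have [l hl] := pick_happy (u0 k) c1 sS.
  have e10 := n10; have e20 := n20; have e21 := n21.
  have e01 : (ord0 : 'I_3) != inord 1 by rewrite eq_sym.
  have e02 : (ord0 : 'I_3) != inord 2 by rewrite eq_sym.
  have e12 : (inord 1 : 'I_3) != inord 2 by rewrite eq_sym.
  case: (I3_cases l) hl => [->|[->|->]] hl.
  + have [W1 [W2 [p' g1 g2]]] := two cW (cA _ a2a) (cA _ a3a) (cB _ b2b) (cB _ b3b)
      (sA _ a2a) (sA _ a3a) (sB _ b2b) (sB _ b3b) (split_disj sP a2a3) (split_disj sQ b2b3).
    have sS' := split_part cX p'.
    apply: (assemble (si := inord 1) (sj := inord 2) (sk := ord0) ij ik jk _ _ _ sS') => //.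
    * by rewrite mk3_1; apply: hiW.
    * by rewrite mk3_2; apply: hjW.
    * by rewrite mk3_0; rewrite mk3_0 in hl.
  + apply: (assemble (si := ord0) (sj := inord 2) (sk := inord 1) ij ik jk _ _ _ sS) => //.
    * by rewrite mk3_0.
    * by rewrite mk3_2; apply: hjW.
  + apply: (assemble (si := ord0) (sj := inord 1) (sk := inord 2) ij ik jk _ _ _ sS) => //.
    * by rewrite mk3_0.
    * by rewrite mk3_1; apply: hjW.
Qed.
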